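(* Let $\gamma,\sigma:[a,b]\to V$ be continuous bounded variation paths, fix $(s,t)\in[a,b]^2$, and define $f(x):=K^{x\gamma,\sigma}(s,t)$ for $x\in\mathbb{R}$. Then $f$ is infinitely differentiable and for every $k\in\mathbb{N}$, \[ f^{(k)}(x)=\sum_{l=0}^\infty x^l\frac{(l+k)!}{l!}\left\langle S(\gamma)^{l+k}_{a,s},S(\sigma)^{l+k}_{a,t}\right\rangle_{l+k}. \] In particular, for $x\neq0$, \[ |f^{(k)}(x)|\le\frac{L_s(\gamma)^{k/2}L_t(\sigma)^{k/2}}{|x|^{k/2}}\,I_k\left(2\sqrt{|x|L_s(\gamma)L_t(\sigma)}\right), \] where $I_k$ is the modified Bessel function of the first kind of order $k$.
   Context: $V$ is a finite-dimensional real inner product space, $\langle\cdot,\cdot\rangle_k$ the induced Hilbert–Schmidt inner product on $V^{\otimes k}$. Signature: $S(\gamma)^0=1$, $S(\gamma)^k_{s,t}=\int_{s<u_1<\dots<u_k<t}d\gamma_{u_1}\otimes\cdots\otimes d\gamma_{u_k}$. $K^{x\gamma,\sigma}(s,t)=\sum_{k\ge0}x^k\langle S(\gamma)^k_{a,s},S(\sigma)^k_{a,t}\rangle_k$. $L_s(\gamma)$ is the length of $\gamma|_{[a,s]}$. *)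

(* Defs.v *)
From HB Require Import structures.
From mathcomp Require Import all_boot all_order all_algebra.
From mathcomp Require Import all_classical all_reals all_analysis.
Set Implicit Arguments. Unset Strict Implicit. Unset Printing Implicit Defensive.
Import Order.TTheory GRing.Theory Num.Theory.
Import numFieldNormedType.Exports.
Local Open Scope classical_set_scope.
Local Open Scope ring_scope.

Section Defs.
Context {R : realType}.

(* A partition of [a,b] is s with itv_partition a b s (points a < s_0 < ... < s_{n-1} = b);
   the j-th subinterval is [nth a (a::s) j, nth a s j]; tg gives the tags. *)
Definition RS_sum (a : R) (s tg : seq R) (f g : R -> R) : R :=
  \sum_(0 <= j < size s) f (nth a tg j) * (g (nth a s j) - g (nth a (a :: s) j)).

Definition is_RS_int (a b : R) (f g : R -> R) (I : R) : Prop :=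
  forall e : R, 0 < e -> exists2 delta : R, 0 < delta &
    forall s tg : seq R, itv_partition a b s -> size tg = size s ->
      (forall j, (j < size s)%N -> nth a (a :: s) j <= nth a tg j <= nth a s j) ->
      (forall j, (j < size s)%N -> nth a s j - nth a (a :: s) j < delta) ->
      `|RS_sum a s tg f g - I| < e.

(* the value of the Riemann--Stieltjes integral \int_a^b f dg (0 if it does not exist) *)
Definition RS_int (a b : R) (f g : R -> R) : R := xget 0 [set I | is_RS_int a b f g I].

Definition euclid {d : nat} (v : 'rV[R]_d) : R := Num.sqrt (\sum_i v 0 i ^+ 2).

(* sig_rev gam a w t, with w the REVERSED word:
   S^{()}_{a,t} = 1,  S^{(i1..ik)}_{a,t} = \int_a^t S^{(i1..i(k-1))}_{a,u} d gam^{ik}_u *)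
Fixpoint sig_rev {d : nat} (gam : R -> 'rV[R]_d) (a : R) (w : seq 'I_d) : R -> R :=
  match w with
  | [::] => fun _ => 1
  | i :: w' => fun t => RS_int a t (sig_rev gam a w') (fun u => gam u 0 i)
  end.

(* coefficient of e_{i1} (x) ... (x) e_{ik} in S(gam)^k_{a,t}, for w = [:: i1; ...; ik] *)
Definition sigc {d : nat} (gam : R -> 'rV[R]_d) (a : R) (w : seq 'I_d) (t : R) : R :=
  sig_rev gam a (rev w) t.

Definition sig_inner {d : nat} (gam sig : R -> 'rV[R]_d) (a : R) (k : nat) (s t : R) : R :=
  \sum_(w : k.-tuple 'I_d) sigc gam a w s * sigc sig a w t.

Definition sigK {d : nat} (x : R) (gam sig : R -> 'rV[R]_d) (a s t : R) : R :=
  limn (fun n => \sum_(0 <= k < n) x ^+ k * sig_inner gam sig a k s t).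

Definition pvariation {d : nat} (a b : R) (gam : R -> 'rV[R]_d) (s : seq R) : R :=
  let F := gam \o nth b (a :: s) in
  \sum_(0 <= n < size s) euclid (F n.+1 - F n).

Definition pvariations {d : nat} (a b : R) (gam : R -> 'rV[R]_d) : set R :=
  [set pvariation a b gam s | s in itv_partition a b].

Definition path_bounded_variation {d : nat} (a b : R) (gam : R -> 'rV[R]_d) : Prop :=
  has_ubound (pvariations a b gam).

Definition plength {d : nat} (a b : R) (gam : R -> 'rV[R]_d) : R :=
  sup (pvariations a b gam).

Definition BesselI (k : nat) (z : R) : R :=
  limn (fun n => \sum_(0 <= m < n)
          (z / 2) ^+ (2 * m + k) / ((m`!)%:R * ((m + k)`!)%:R)).

End Defs.

(* Main.v *)
Require Import Defs.
From HB Require Import structures.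
From mathcomp Require Import all_boot all_order all_algebra.
From mathcomp Require Import all_classical all_reals all_analysis.
From mathcomp Require Import ring lra.
Import Order.TTheory GRing.Theory Num.Theory.
Import numFieldNormedType.Exports.
Local Open Scope classical_set_scope.
Local Open Scope ring_scope.

Set Implicit Arguments. Unset Strict Implicit. Unset Printing Implicit Defensive.


Section CS.
Context {R : realType} {I : finType}.
Implicit Types f g : I -> R.

Lemma sum_mul_sum (a b : I -> R) :
  (\sum_i a i) * (\sum_j b j) = \sum_i \sum_j a i * b j.
Proof. by rewrite mulr_suml; apply: eq_bigr => i _; rewrite mulr_sumr. Qed.

Lemma cauchy_schwarz f g :
  (\sum_i f i * g i) ^+ 2 <= (\sum_i f i ^+ 2) * (\sum_i g i ^+ 2).
Proof.
rewrite -subr_ge0 expr2 !sum_mul_sum.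
have E : \sum_i \sum_j (f i * g j - f j * g i) ^+ 2 =
   2 * (\sum_i \sum_j (f i ^+ 2 * g j ^+ 2) - \sum_i \sum_j (f i * g i * (f j * g j))).
  rewrite (eq_bigr (fun i => \sum_j (f i ^+ 2 * g j ^+ 2) + \sum_j (f j ^+ 2 * g i ^+ 2)
       - 2 * \sum_j (f i * g i * (f j * g j)))); last first.
    move=> i _; rewrite mulr_sumr -big_split -sumrB /=; apply: eq_bigr => j _; ring.
  rewrite sumrB big_split /= -mulr_sumr.
  rewrite [X in _ + X - _](exchange_big) /=.
  ring.
have -> : \sum_i \sum_j f i ^+ 2 * g j ^+ 2 - \sum_i \sum_j f i * g i * (f j * g j) =
   2^-1 * \sum_i \sum_j (f i * g j - f j * g i) ^+ 2.
  by rewrite E; field.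
apply: mulr_ge0; first by rewrite invr_ge0.
by apply: sumr_ge0 => i _; apply: sumr_ge0 => j _; apply: sqr_ge0.
Qed.

Definition nrm f := Num.sqrt (\sum_i f i ^+ 2).

Lemma nrm_ge0 f : 0 <= nrm f.
Proof. exact: sqrtr_ge0. Qed.

Lemma nrm_sqr f : nrm f ^+ 2 = \sum_i f i ^+ 2.
Proof. by rewrite sqr_sqrtr // sumr_ge0 // => i _; apply: sqr_ge0. Qed.

Lemma abs_dot f g : `|\sum_i f i * g i| <= nrm f * nrm g.
Proof.
rewrite -sqrtr_sqr /nrm -sqrtrM ?sumr_ge0 // => [|i _]; last exact: sqr_ge0.
by rewrite ler_sqrt ?cauchy_schwarz // mulr_ge0 // sumr_ge0 // => i _; apply: sqr_ge0.
Qed.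

Lemma nrmD f g : nrm (fun i => f i + g i) <= nrm f + nrm g.
Proof.
have h : nrm f + nrm g = Num.sqrt ((nrm f + nrm g) ^+ 2).
  by rewrite sqrtr_sqr ger0_norm // addr_ge0 // nrm_ge0.
rewrite h {1}/nrm ler_sqrt ?sqr_ge0 //.
have -> : \sum_i (f i + g i) ^+ 2 = \sum_i f i ^+ 2 + (\sum_i f i * g i) *+ 2 + \sum_i g i ^+ 2.
  rewrite -sumrMnl -!big_split /=; apply: eq_bigr => i _; ring.
rewrite sqrrD -/(nrm f) -/(nrm g) !nrm_sqr.
rewrite lerD2r lerD2l lerMn2r /=.
exact: le_trans (ler_norm _) (abs_dot f g).
Qed.

Lemma nrm_sum (n : nat) (F : nat -> I -> R) :
  nrm (fun i => \sum_(0 <= j < n) F j i) <= \sum_(0 <= j < n) nrm (F j).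
Proof.
elim: n => [|n IH].
  rewrite big_geq //; rewrite /nrm (eq_bigr (fun _ => 0)) ?big1 ?sqrtr0 // => i _.
  by rewrite big_geq // expr2 mulr0.
rewrite big_nat_recr //=.
have -> : (fun i => \sum_(0 <= j < n.+1) F j i) = (fun i => \sum_(0 <= j < n) F j i + F n i).
  by apply/funext => i; rewrite big_nat_recr.
exact: le_trans (nrmD _ _) (lerD IH (lexx _)).
Qed.
End CS.


Section Length.
Context {R : realType} {d : nat}.
Implicit Types (gam : R -> 'rV[R]_d) (s : seq R).

Lemma euclid_ge0 (v : 'rV[R]_d) : 0 <= euclid v.
Proof. exact: sqrtr_ge0. Qed.

Lemma euclid0 : euclid (0 : 'rV[R]_d) = 0.
Proof.
rewrite /euclid big1 ?sqrtr0 // => i _; by rewrite mxE expr2 mulr0.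
Qed.

Lemma pv_ge0 a y gam s : 0 <= pvariation a y gam s.
Proof. by apply: sumr_ge0 => i _; apply: euclid_ge0. Qed.

Lemma itv_partition_rcons a y z s :
  itv_partition a y s -> y < z -> itv_partition a z (rcons s z).
Proof. by move=> hs yz; rewrite -cats1; apply: itv_partition_cat hs (itv_partition1 yz). Qed.

Lemma pv_rcons a y z gam s : itv_partition a y s ->
  pvariation a z gam (rcons s z) = pvariation a y gam s + euclid (gam z - gam y).
Proof.
move=> hs; rewrite /pvariation size_rcons big_nat_recr //=; congr (_ + _).
  apply: eq_big_nat => n /andP[_ hn] /=.
  have hn' : (n < (size s).+1)%N by rewrite ltnS ltnW.
  rewrite -rcons_cons !nth_rcons /= hn hn'.
  by rewrite (set_nth_default y z hn) (set_nth_default y z (_ : n < size (a :: s))%N).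
rewrite nth_rcons ltnn eqxx -rcons_cons nth_rcons /= ltnSn.
by rewrite (itv_partition_nth_size _ hs).
Qed.

Lemma itv_partition_aa (a : R) : itv_partition a a ([::] : seq R).
Proof. by rewrite /itv_partition /= eqxx. Qed.

Lemma pvs_nonempty a y gam : a <= y -> pvariations a y gam !=set0.
Proof.
rewrite le_eqVlt => /orP[/eqP <-|ay].
  by exists (pvariation a a gam [::]), [::] => //; apply: itv_partition_aa.
by exists (pvariation a y gam [:: y]), [:: y] => //; apply: itv_partition1.
Qed.

Variables (a b : R) (gam : R -> 'rV[R]_d).
Hypothesis hBV : path_bounded_variation a b gam.

Lemma BV_sub z : a <= z -> z <= b -> has_ubound (pvariations a z gam).
Proof.
move=> az zb; case: hBV => M hM; exists M => _ [s hs <-].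
have [zb'|zb'] := eqVneq z b; first by apply: hM; exists s => //; rewrite -zb'.
have {}zb : z < b by rewrite lt_neqAle zb' zb.
apply: le_trans (hM _ _); last by exists (rcons s b) => //; apply: itv_partition_rcons hs zb.
by rewrite (pv_rcons _ _ hs) lerDl euclid_ge0.
Qed.

Definition om u := plength a u gam.

Lemma om_ub y s : a <= y -> y <= b -> itv_partition a y s -> pvariation a y gam s <= om y.
Proof.
move=> ay yb hs; apply: sup_upper_bound; last by exists s.
by split; [apply: pvs_nonempty | apply: BV_sub].
Qed.

Lemma om_ge0 y : a <= y -> y <= b -> 0 <= om y.
Proof.
move=> ay yb; have [_ [s hs _]] := pvs_nonempty gam ay.
exact: le_trans (pv_ge0 _ _ _ _) (om_ub ay yb hs).
Qed.

Lemma om_a : a <= b -> om a = 0.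
Proof.
move=> ab; apply/eqP; rewrite eq_le om_ge0 // andbT.
apply: ge_sup; first exact: pvs_nonempty.
move=> _ [s hs <-]; rewrite (itv_partitionxx hs) /pvariation big_geq //.
Qed.

Lemma om_add y z : a <= y -> y <= z -> z <= b -> om y + euclid (gam z - gam y) <= om z.
Proof.
move=> ay; rewrite le_eqVlt => /orP[/eqP <-|yz] zb.
  by rewrite subrr euclid0 addr0.
have az : a <= z by apply: le_trans ay (ltW yz).
rewrite -lerBrDr; apply: ge_sup; first exact: pvs_nonempty.
move=> _ [s hs <-]; rewrite lerBrDr -(pv_rcons _ _ hs).
apply: om_ub => //; exact: itv_partition_rcons hs yz.
Qed.

Lemma om_le y z : a <= y -> y <= z -> z <= b -> om y <= om z.
Proof.
move=> ay yz zb; apply: le_trans (om_add ay yz zb); by rewrite lerDl euclid_ge0.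
Qed.

End Length.


Section Misc.
Context {R : realType}.

Lemma pow_ineq (n : nat) (y z : R) : 0 <= y -> y <= z ->
  y ^+ n / n`!%:R * (z - y) <= (z ^+ n.+1 - y ^+ n.+1) / n.+1`!%:R.
Proof.
move=> y0 yz.
set S := \sum_(i < n.+1) z ^+ (n.+1.-1 - i) * y ^+ i.
have hS : y ^+ n *+ n.+1 <= S.
  rewrite -[n.+1 in X in X <= _]card_ord -sumr_const; apply: ler_sum => i _ /=.
  have hi : (i <= n)%N by rewrite -ltnS.
  rewrite -{1}(subnK hi) exprD ler_wpM2r ?exprn_ge0 //.
  by rewrite lerXn2r // nnegrE (le_trans y0).
have hf : (0 : R) < n`!%:R by rewrite ltr0n fact_gt0.
have -> : (z ^+ n.+1 - y ^+ n.+1) / n.+1`!%:R = ((z - y) / n`!%:R) * (S / n.+1%:R).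
  rewrite subrXX factS natrM -/S; field.
  by rewrite (gt_eqF hf) andbT addrC natr1 pnatr_eq0.
have -> : y ^+ n / n`!%:R * (z - y) = ((z - y) / n`!%:R) * y ^+ n by ring.
apply: ler_wpM2l; first by rewrite divr_ge0 ?subr_ge0 // ltW.
by rewrite ler_pdivlMr ?ltr0Sn // mulr_natr.
Qed.

Lemma mesh_partition (a u delta : R) : a <= u -> 0 < delta ->
  exists s, itv_partition a u s /\
    forall j, (j < size s)%N -> nth a s j - nth a (a :: s) j < delta.
Proof.
move=> au dp; have [<-|ua] := eqVneq a u.
  by exists [::]; split => //; rewrite /itv_partition /= eqxx.
have au' : a < u by rewrite lt_neqAle ua au.
have [N [Np hN]] : exists N : nat, (0 : R) < N%:R /\ (u - a) / N%:R < delta.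
  exists (Num.truncn ((u - a) / delta)).+1; split; first by rewrite ltr0Sn.
  rewrite ltr_pdivrMr ?ltr0Sn // mulrC -ltr_pdivrMr //; exact: truncnS_gt.
pose p (k : nat) := a + (u - a) * k%:R / N%:R.
have pS k : p k.+1 - p k = (u - a) / N%:R.
  rewrite /p -natr1; field; by rewrite gt_eqF.
have hn0 j : (j <= N)%N -> nth a (a :: mkseq (fun k => p k.+1) N) j = p j.
  case: j => [|j] hj /=; first by rewrite /p mulr0 mul0r addr0.
  by rewrite nth_mkseq.
exists (mkseq (fun k => p k.+1) N); rewrite size_mkseq; split.
  split.
    apply/(pathP a) => i; rewrite size_mkseq => hi.
    rewrite (hn0 i (ltnW hi)) (nth_mkseq _ _ hi) -subr_gt0 pS.
    apply: divr_gt0 Np; by rewrite subr_gt0.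
  rewrite (last_nth a) size_mkseq (hn0 N (leqnn N)) /p (mulfK (lt0r_neq0 Np)).
  by rewrite addrC subrK.
move=> j hj; rewrite (nth_mkseq _ _ hj) (hn0 j (ltnW hj)) pS; exact: hN.
Qed.

End Misc.


Lemma sum_mul_sum2 {R : realType} {I J : finType} (f : I -> R) (g : J -> R) :
  (\sum_i f i) * (\sum_j g j) = \sum_i \sum_j f i * g j.
Proof. by rewrite mulr_suml; apply: eq_bigr => i _; rewrite mulr_sumr. Qed.

Section Sig.
Context {R : realType} {d : nat}.
Variables (a b : R) (gam : R -> 'rV[R]_d).
Hypothesis hBV : path_bounded_variation a b gam.

Definition G n u := \sum_(w : n.-tuple 'I_d) sig_rev gam a w u ^+ 2.

Lemma G_ge0 n u : 0 <= G n u.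
Proof. by apply: sumr_ge0 => w _; apply: sqr_ge0. Qed.

Lemma G0 u : G 0 u = 1.
Proof.
rewrite /G (eq_bigr (fun _ => 1)) ?sumr_const ?card_tuple ?expn0 //.
by move=> w _; rewrite (tuple0 w) /= expr1n.
Qed.

Lemma G_S n u : G n.+1 u = \sum_(p : 'I_d * n.-tuple 'I_d)
   (RS_int a u (sig_rev gam a p.2) (fun x => gam x 0 p.1)) ^+ 2.
Proof.
rewrite /G (reindex (fun p : 'I_d * n.-tuple 'I_d => cons_tuple p.1 p.2)) //=.
apply: onW_bij; exists (fun w : n.+1.-tuple 'I_d => (thead w, behead_tuple w)).
  by case=> i v /=; congr pair; apply: val_inj.
move=> w /=; rewrite [in RHS](tuple_eta w); exact: val_inj.
Qed.

Lemma RS_bound n u s tg :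
  (forall v, a <= v -> v <= b -> G n v <= (om a gam v ^+ n / n`!%:R) ^+ 2) ->
  a <= u -> u <= b -> itv_partition a u s ->
  (forall j, (j < size s)%N -> nth a tg j = nth a (a :: s) j) ->
  \sum_(p : 'I_d * n.-tuple 'I_d)
     (RS_sum a s tg (sig_rev gam a p.2) (fun x => gam x 0 p.1)) ^+ 2
    <= (om a gam u ^+ n.+1 / n.+1`!%:R) ^+ 2.
Proof.
move=> IH au ub hs htg.
set B := om a gam u ^+ n.+1 / n.+1`!%:R.
pose tau j := nth a (a :: s) j.
pose X j (p : 'I_d * n.-tuple 'I_d) :=
  sig_rev gam a p.2 (tau j) * (gam (tau j.+1) 0 p.1 - gam (tau j) 0 p.1).
have E : (fun p : 'I_d * n.-tuple 'I_d =>
    RS_sum a s tg (sig_rev gam a p.2) (fun x => gam x 0 p.1)) =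
    (fun p => \sum_(0 <= j < size s) X j p).
  apply/funext => p; rewrite /RS_sum; apply: eq_big_nat => j /andP[_ hj].
  by rewrite htg.
have hpt j : (j <= size s)%N -> a <= tau j /\ tau j <= u.
  move=> hj; rewrite /tau (set_nth_default u a) ?ltnS //.
  by split; [apply: itv_partition_nth_ge hs | apply: itv_partition_nth_le hs]; rewrite ltnS.
have hlt j : (j < size s)%N -> tau j <= tau j.+1.
  move=> hj; case: hs => hp _; exact: ltW ((pathP a hp) j hj).
have hnX j : (j < size s)%N -> nrm (X j) <=
    om a gam (tau j) ^+ n / n`!%:R * (om a gam (tau j.+1) - om a gam (tau j)).
  move=> hj.
  have [a1 t1] := hpt j (ltnW hj); have [a2 t2] := hpt j.+1 hj.
  have t1b : tau j <= b by apply: le_trans ub.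
  have t2b : tau j.+1 <= b by apply: le_trans ub.
  have -> : nrm (X j) = Num.sqrt (G n (tau j)) * euclid (gam (tau j.+1) - gam (tau j)).
    rewrite /nrm /G /euclid -sqrtrM; last by apply: sumr_ge0 => w _; apply: sqr_ge0.
    congr Num.sqrt; rewrite sum_mul_sum2 exchange_big pair_big /=.
    by apply: eq_bigr => -[i v] _ /=; rewrite !mxE /X /= exprMn.
  apply: ler_pM; [exact: sqrtr_ge0 | exact: euclid_ge0 | |].
    have h0 : 0 <= om a gam (tau j) ^+ n / n`!%:R.
      by rewrite divr_ge0 ?exprn_ge0 ?(om_ge0 hBV).
    by rewrite -(ger0_norm h0) -sqrtr_sqr ler_sqrt ?sqr_ge0 // IH.
  by rewrite lerBrDl (om_add hBV) // hlt.
have main : nrm (fun p => \sum_(0 <= j < size s) X j p) <= B.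
  apply: le_trans (nrm_sum _ _) _.
  apply: (@le_trans _ _ (\sum_(0 <= j < size s)
     (om a gam (tau j.+1) ^+ n.+1 - om a gam (tau j) ^+ n.+1) / n.+1`!%:R)).
    apply: ler_sum_nat => j /andP[_ hj]; apply: le_trans (hnX j hj) _.
    have [a1 t1] := hpt j (ltnW hj); have [a2 t2] := hpt j.+1 hj.
    apply: pow_ineq; first exact: (om_ge0 hBV) (le_trans t1 ub).
    exact: (om_le hBV) (hlt j hj) (le_trans t2 ub).
  rewrite -mulr_suml (telescope_sumr (fun k => om a gam (tau k) ^+ n.+1)) //.
  rewrite /tau /= (itv_partition_nth_size _ hs) (om_a hBV (le_trans au ub)).
  by rewrite expr0n subr0.
rewrite (eq_bigr (fun p => (\sum_(0 <= j < size s) X j p) ^+ 2)); last first.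
  by move=> p _; rewrite (congr1 (fun f => f p) E).
rewrite -nrm_sqr expr2 [B ^+ 2]expr2.
by apply: ler_pM; rewrite ?nrm_ge0.
Qed.

Lemma G_bound n u : a <= u -> u <= b -> G n u <= (om a gam u ^+ n / n`!%:R) ^+ 2.
Proof.
elim: n u => [|n IH] u au ub.
  by rewrite G0 expr0 fact0 mulr1n invr1 mulr1 expr1n.
rewrite G_S.
set c := fun p : 'I_d * n.-tuple 'I_d => RS_int a u (sig_rev gam a p.2) (fun x => gam x 0 p.1).
change (\sum_p c p ^+ 2 <= (om a gam u ^+ n.+1 / n.+1`!%:R) ^+ 2).
set B := om a gam u ^+ n.+1 / n.+1`!%:R.
apply/ler_addgt0Pr => e ep.
set C := \sum_p `|c p|.
have C0 : 0 <= C by apply: sumr_ge0 => p _; apply: normr_ge0.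
have C1 : 0 < C + 1 by apply: ltr_wpDl C0 ltr01.
set e' := e / (2 * (C + 1)).
have e'p : 0 < e' by rewrite divr_gt0 // mulr_gt0.
have hdl : forall p : 'I_d * n.-tuple 'I_d, exists dl : R, 0 < dl /\
   ((exists I, is_RS_int a u (sig_rev gam a p.2) (fun x => gam x 0 p.1) I) ->
   forall s tg, itv_partition a u s -> size tg = size s ->
     (forall j, (j < size s)%N -> nth a (a :: s) j <= nth a tg j <= nth a s j) ->
     (forall j, (j < size s)%N -> nth a s j - nth a (a :: s) j < dl) ->
     `|RS_sum a s tg (sig_rev gam a p.2) (fun x => gam x 0 p.1) - c p| < e').
  move=> p; have [hex|hnex] := pselect
     (exists I, is_RS_int a u (sig_rev gam a p.2) (fun x => gam x 0 p.1) I).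
    have hI : is_RS_int a u (sig_rev gam a p.2) (fun x => gam x 0 p.1) (c p).
      exact: (xgetPex 0 hex).
    have [dl dlp H] := hI e' e'p; exists dl; split => // _; exact: H.
  by exists 1; split => // hex; case: (hnex hex).
have [f hf] := choice hdl.
pose delta := \big[Num.min/1]_p f p.
have dp : 0 < delta.
  apply: (big_ind (fun x => 0 < x)) => // [x y hx hy|p _]; first by rewrite lt_min hx hy.
  exact: (hf p).1.
have dle p : delta <= f p by rewrite /delta (bigD1 p) //= ge_min lexx.
have [s [hs hmesh]] := mesh_partition au dp.
pose tg := mkseq (fun j => nth a (a :: s) j) (size s).
have htg j : (j < size s)%N -> nth a tg j = nth a (a :: s) j by move=> hj; rewrite nth_mkseq.
pose r (p : 'I_d * n.-tuple 'I_d) := RS_sum a s tg (sig_rev gam a p.2) (fun x => gam x 0 p.1).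
have hr p : `|c p * (c p - r p)| <= `|c p| * e'.
  have [hex|hnex] := pselect
     (exists I, is_RS_int a u (sig_rev gam a p.2) (fun x => gam x 0 p.1) I).
    rewrite normrM ler_wpM2l // distrC ltW //; have H := (hf p).2 hex s tg hs; apply: H.
    - by rewrite size_mkseq.
    - move=> j hj; rewrite htg // lexx /=; have [hp _] := hs; exact: ltW ((pathP a hp) j hj).
    - move=> j hj; exact: lt_le_trans (hmesh j hj) (dle p).
  have -> : c p = 0 by rewrite /c /RS_int xgetPN // => I hI; apply: hnex; exists I.
  by rewrite mul0r normr0 mul0r.
have hR : \sum_(p : 'I_d * n.-tuple 'I_d) r p ^+ 2 <= B ^+ 2.
  exact: (RS_bound IH au ub hs htg).
set X := \sum_p c p ^+ 2.
have hsplit : X = \sum_p c p * (c p - r p) + \sum_p c p * r p.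
  by rewrite -big_split; apply: eq_bigr => p _ /=; ring.
have h1 : \sum_p c p * (c p - r p) <= C * e'.
  rewrite /C mulr_suml; apply: ler_sum => p _; exact: le_trans (ler_norm _) (hr p).
have h2 : \sum_p c p * r p <= (X + \sum_p r p ^+ 2) / 2.
  rewrite /X -big_split mulr_suml; apply: ler_sum => p _ /=.
  rewrite ler_pdivlMr //; have := sqr_ge0 (c p - r p); rewrite sqrrB; lra.
have h3 : C * e' * 2 <= e.
  have -> : C * e' * 2 = e * (C / (C + 1)) by rewrite /e'; field; rewrite gt_eqF.
  rewrite -[X in _ <= X]mulr1 ler_pM2l // ler_pdivrMr // mul1r lerDl ler01.
  done.

move: hsplit h1 h2 h3 hR.
move: (\sum_p c p * (c p - r p)) (\sum_p c p * r p) (\sum_p r p ^+ 2) (C * e') => A1 A2 S K.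
lra.
Qed.

End Sig.


Lemma nrm_sigc {R : realType} {d : nat} (a : R) (gam : R -> 'rV[R]_d) n u :
  nrm (fun w : n.-tuple 'I_d => sigc gam a w u) = Num.sqrt (G a gam n u).
Proof.
have rinj : injective (@rev_tuple n 'I_d).
  move=> x y h; apply: val_inj; rewrite -[val x]revK -[val y]revK; congr rev.
  exact: (congr1 val h).
rewrite /nrm /G [in RHS](reindex_inj rinj) //.
Qed.

Lemma sqrtG_bound {R : realType} {d : nat} (a b : R) (gam : R -> 'rV[R]_d) n u :
  path_bounded_variation a b gam -> a <= u -> u <= b ->
  Num.sqrt (G a gam n u) <= plength a u gam ^+ n / n`!%:R.
Proof.
move=> hBV au ub.
have h0 : 0 <= plength a u gam ^+ n / n`!%:R.
  by rewrite divr_ge0 ?exprn_ge0 // (om_ge0 hBV au ub).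
by rewrite -(ger0_norm h0) -sqrtr_sqr ler_sqrt ?sqr_ge0 // (G_bound hBV).
Qed.

Lemma sig_inner_bound {R : realType} {d : nat} (a b : R) (gam sig : R -> 'rV[R]_d) n s t :
  path_bounded_variation a b gam -> path_bounded_variation a b sig ->
  a <= s -> s <= b -> a <= t -> t <= b ->
  `|sig_inner gam sig a n s t| <=
    (plength a s gam * plength a t sig) ^+ n / (n`!%:R) ^+ 2.
Proof.
move=> hg hs1 sa sb ta tb; rewrite /sig_inner.
apply: le_trans (abs_dot (fun w : n.-tuple 'I_d => sigc gam a w s) (fun w : n.-tuple 'I_d => sigc sig a w t)) _.
rewrite !nrm_sigc.
apply: le_trans (ler_pM (sqrtr_ge0 _) (sqrtr_ge0 _) (sqrtG_bound n hg sa sb)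
   (sqrtG_bound n hs1 ta tb)) _.
have hf : (n`!%:R : R) != 0 by rewrite pnatr_eq0 -lt0n fact_gt0.
by rewrite exprMn expr2 invfM le_eqVlt; apply/orP; left; apply/eqP; ring.
Qed.


Section PS.
Context {R : realType}.

Lemma fact_neq0 n : (n`!%:R : R) != 0.
Proof. by rewrite pnatr_eq0 -lt0n fact_gt0. Qed.

Lemma fact_gt0R n : (0 : R) < n`!%:R.
Proof. by rewrite ltr0n fact_gt0. Qed.

Lemma cvg_by_exp (u : R^nat) (A y : R) : 0 <= A -> 0 <= y ->
  (forall l, 0 <= u l) -> (forall l, u l <= A * (y ^+ l / l`!%:R)) ->
  cvgn (series u).
Proof.
move=> A0 y0 u0 hu.
apply: (@series_le_cvg _ u (A *: exp_coeff y)) => //.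
- by move=> l /=; rewrite mulr_ge0 // divr_ge0 ?exprn_ge0 // ltW // fact_gt0R.
- exact: is_cvg_seriesZ (is_cvg_series_exp_coeff y).
Qed.

Variables (c : R^nat) (M : R).
Hypothesis M0 : 0 <= M.
Hypothesis hc : forall k, `|c k| <= M ^+ k / (k`!%:R) ^+ 2.

Definition Dc j := iter j (@pseries_diffs R) c.

Lemma Dc_E j l : Dc j l = (l + j)%N`!%:R / l`!%:R * c (l + j)%N.
Proof.
elim: j l => [|j IH] l.
  by rewrite /Dc /= !addn0 divff ?fact_neq0 // mul1r.
rewrite /Dc iterS -/(Dc j) /pseries_diffs IH addSnnS factS natrM.
have := fact_neq0 l; have := fact_neq0 (l + j.+1)%N => h1 h2.
field; by rewrite h2 /= addrC natr1 pnatr_eq0.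
Qed.

Lemma Dc_bound j l : `|Dc j l| <= M ^+ (l + j)%N / (l`!%:R * (l + j)%N`!%:R).
Proof.
rewrite Dc_E normrM ger0_norm; last by rewrite divr_ge0 ?ltW ?fact_gt0R.
apply: le_trans (ler_wpM2l _ (hc _)) _; first by rewrite divr_ge0 ?ltW ?fact_gt0R.
have h1 := fact_gt0R l; have h2 := fact_gt0R (l + j)%N.
rewrite le_eqVlt; apply/orP; left; apply/eqP; field.
by rewrite !gt_eqF.
Qed.

Lemma cvg_Dc j K : cvgn (pseries (Dc j) K).
Proof.
apply: normed_cvg; rewrite /normed_series_of /=.
apply: (@cvg_by_exp _ (M ^+ j) (M * `|K|)); rewrite ?exprn_ge0 ?mulr_ge0 //.
move=> l; rewrite normrM normrX.
apply: le_trans (ler_wpM2r (exprn_ge0 _ (normr_ge0 _)) (Dc_bound j l)) _.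
have h1 := fact_gt0R l; have h2 := fact_gt0R (l + j)%N.
have h3 : 1 <= ((l + j)%N`!%:R : R) by rewrite ler1n fact_gt0.
rewrite exprMn exprD invfM.
have -> : M ^+ l * M ^+ j * ((l`!%:R)^-1 * ((l + j)%N`!%:R)^-1) * `|K| ^+ l =
   (M ^+ j * (M ^+ l * `|K| ^+ l / l`!%:R)) * ((l + j)%N`!%:R)^-1 by ring.
rewrite -[X in _ <= X]mulr1; apply: ler_wpM2l.
  apply: mulr_ge0; first exact: exprn_ge0.
  by apply: divr_ge0; [apply: mulr_ge0; apply: exprn_ge0 | apply: ltW].
by rewrite invf_le1 // ltr0n fact_gt0.
Qed.

Definition psf x := limn (pseries c x).

Lemma derivn_psf k : derive1n k psf = fun x => limn (pseries (Dc k) x).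
Proof.
elim: k => [|k IH]; first by rewrite derive1n0.
rewrite derive1nS IH; apply/funext => x; rewrite derive1E.
have hx : `|x| < Num.norm (`|x| + 1).
  by rewrite [X in _ < X]ger0_norm ?ltrDl ?ltr01 // addr_ge0.
have H := @pseries_snd_diffs R (Dc k) (`|x| + 1) x (@cvg_Dc k _) (@cvg_Dc k.+1 _) (@cvg_Dc k.+2 _) hx.
exact: (@derive_val _ _ _ _ _ _ _ H).
Qed.

Lemma derivable_psf k x : derivable (derive1n k psf) x 1.
Proof.
rewrite derivn_psf.
have hx : `|x| < Num.norm (`|x| + 1).
  by rewrite [X in _ < X]ger0_norm ?ltrDl ?ltr01 // addr_ge0.
have H := @pseries_snd_diffs R (Dc k) (`|x| + 1) x (@cvg_Dc k _) (@cvg_Dc k.+1 _) (@cvg_Dc k.+2 _) hx.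
exact: (@ex_derive _ _ _ _ _ _ _ H).
Qed.

Definition vser k (x : R) l := `|x| ^+ l * M ^+ (l + k)%N / (l`!%:R * (l + k)%N`!%:R).

Lemma vser_ge0 k x l : 0 <= vser k x l.
Proof.
rewrite /vser divr_ge0 ?mulr_ge0 ?exprn_ge0 //; exact: ltW (mulr_gt0 (fact_gt0R _) (fact_gt0R _)).
Qed.

Lemma term_le k x l : `|Dc k l * x ^+ l| <= vser k x l.
Proof.
rewrite normrM normrX mulrC /vser -mulrA; apply: ler_wpM2l; first exact: exprn_ge0.
exact: Dc_bound.
Qed.

Lemma cvg_vser k x : cvgn (series (vser k x)).
Proof.
apply: (@cvg_by_exp _ (M ^+ k) (M * `|x|)); rewrite ?exprn_ge0 ?mulr_ge0 //.
  exact: vser_ge0.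
move=> l; rewrite /vser.
have h1 := fact_gt0R l; have h2 := fact_gt0R (l + k)%N.
rewrite exprMn exprD invfM.
have -> : `|x| ^+ l * (M ^+ l * M ^+ k) * ((l`!%:R)^-1 * ((l + k)%N`!%:R)^-1) =
   (M ^+ k * (M ^+ l * `|x| ^+ l / l`!%:R)) * ((l + k)%N`!%:R)^-1 by ring.
rewrite -[X in _ <= X]mulr1; apply: ler_wpM2l.
  apply: mulr_ge0; first exact: exprn_ge0.
  by apply: divr_ge0; [apply: mulr_ge0; apply: exprn_ge0 | apply: ltW].
by rewrite invf_le1 // ler1n fact_gt0.
Qed.

Lemma psf_bound k x : `|limn (pseries (Dc k) x)| <= limn (series (vser k x)).
Proof.
have cn : cvgn [normed pseries (Dc k) x].
  rewrite /normed_series_of /=.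
  apply: (@series_le_cvg _ _ (vser k x)).
  - by move=> l; apply: normr_ge0.
  - by move=> l; apply: vser_ge0.
  - by move=> l; apply: term_le.
  - exact: cvg_vser.
apply: le_trans (lim_series_norm cn) _.
apply: lim_series_le => //; [exact: cvg_vser | exact: term_le].
Qed.

End PS.


Unset Implicit Arguments. Set Strict Implicit.

Theorem mainTheorem13 (R : realType) (d : nat) (a b : R)
    (gam sig : R -> 'rV[R]_d) (s t : R) :
  {within `[a, b], continuous gam} -> {within `[a, b], continuous sig} ->
  path_bounded_variation a b gam -> path_bounded_variation a b sig ->
  s \in `[a, b] -> t \in `[a, b] ->
  let f := fun x : R => sigK x gam sig a s t in
  (forall (k : nat) (x : R), derivable (derive1n k f) x 1) /\
  (forall (k : nat) (x : R),
     let u := fun n => \sum_(0 <= l < n)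
        x ^+ l * (((l + k)`!)%:R / (l`!)%:R) * sig_inner gam sig a (l + k) s t in
     cvgn u /\ derive1n k f x = limn u) /\
  (forall (k : nat) (x : R), x != 0 ->
     `|derive1n k f x| <=
       Num.sqrt (plength a s gam) ^+ k * Num.sqrt (plength a t sig) ^+ k
         / Num.sqrt `|x| ^+ k
       * BesselI k (2 * Num.sqrt (`|x| * plength a s gam * plength a t sig))).
Proof.
move=> _ _ hg hs hs1 ht1 f.
move: hs1 ht1; rewrite !in_itv /= => /andP[sa sb] /andP[ta tb].
set L1 := plength a s gam; set L2 := plength a t sig.
have L10 : 0 <= L1 by apply: (om_ge0 hg sa sb).
have L20 : 0 <= L2 by apply: (om_ge0 hs ta tb).
set M := L1 * L2.
have M0 : 0 <= M by apply: mulr_ge0.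
pose c k := sig_inner gam sig a k s t.
have hc : forall k, `|c k| <= M ^+ k / (k`!%:R) ^+ 2.
  by move=> k; apply: (sig_inner_bound k hg hs sa sb ta tb).
have hf : f = psf c.
  apply/funext => x; rewrite /f /sigK /psf.
  have -> : (fun n => \sum_(0 <= k < n) x ^+ k * sig_inner gam sig a k s t) = pseries c x.
    by apply/funext => n; rewrite /pseries /series /=; apply: eq_bigr => k _; rewrite mulrC.
  by [].
split; first by move=> k x; rewrite hf; exact: (derivable_psf M0 hc).
split.
  move=> k x.
  have Eu : (fun n => \sum_(0 <= l < n)
        x ^+ l * (((l + k)`!)%:R / (l`!)%:R) * sig_inner gam sig a (l + k) s t) = pseries (Dc c k) x.
    apply/funext => n; rewrite /pseries /series /=; apply: eq_bigr => l _.
    by rewrite (Dc_E c k l) /c; ring.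
  by rewrite Eu hf (derivn_psf M0 hc); split => //; exact: (cvg_Dc M0 hc).
move=> k x x0.
rewrite hf (derivn_psf M0 hc).
apply: le_trans (psf_bound M0 hc k x) _.
set sx := Num.sqrt `|x|; set s1 := Num.sqrt L1; set s2 := Num.sqrt L2.
have sxp : 0 < sx by rewrite sqrtr_gt0 normr_gt0.
have sx0 : sx != 0 by rewrite gt_eqF.
have e1 : s1 * s1 = L1 by rewrite -expr2 sqr_sqrtr.
have e2 : s2 * s2 = L2 by rewrite -expr2 sqr_sqrtr.
set P := s1 ^+ k * s2 ^+ k / sx ^+ k.
set q := Num.sqrt (`|x| * L1 * L2).
have q0 : 0 <= q by apply: sqrtr_ge0.
have hq : q = sx * s1 * s2 by rewrite /q !sqrtrM ?mulr_ge0 ?normr_ge0.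
have hq2 : q ^+ 2 = `|x| * M by rewrite sqr_sqrtr ?mulrA // !mulr_ge0 ?normr_ge0.
have hPq : P * q ^+ k = M ^+ k.
  have -> : P * q ^+ k = (s1 * s1) ^+ k * (s2 * s2) ^+ k.
    rewrite hq !exprMn /P; field; exact: expf_neq0.
  by rewrite e1 e2 -exprMn.
pose Bt m := q ^+ (2 * m + k) / (m`!%:R * (m + k)`!%:R).
have h2q : 2 * q / 2 = q by field.
have hB : BesselI k (2 * q) = limn (series Bt) by rewrite /BesselI h2q.
have cB : cvgn (series Bt).
  apply: (@cvg_by_exp _ _ (q ^+ k) (q ^+ 2)); rewrite ?exprn_ge0 //.
    move=> m; apply: divr_ge0; first exact: exprn_ge0.
    by rewrite mulr_ge0 ?ler0n.
  move=> m; rewrite /Bt exprD exprM invfM.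
  have h1 := fact_gt0R (R := R) m; have h3 := fact_gt0R (R := R) (m + k)%N.
  have -> : q ^+ 2 ^+ m * q ^+ k * ((m`!%:R)^-1 * ((m + k)%N`!%:R)^-1) =
     (q ^+ k * (q ^+ 2 ^+ m / m`!%:R)) * ((m + k)%N`!%:R)^-1 by ring.
  rewrite -[X in _ <= X]mulr1; apply: ler_wpM2l.
    apply: mulr_ge0; first exact: exprn_ge0.
    by apply: divr_ge0; [apply: exprn_ge0; apply: exprn_ge0 | apply: ltW].
  by rewrite invf_le1 // ler1n fact_gt0.
have hV : series (vser M k x) = P *: series Bt.
  apply/funext => n; rewrite /series /=.
  change ((P *: (fun n0 : nat => \sum_(0 <= k0 < n0) Bt k0)) n) with (P * \sum_(0 <= k0 < n) Bt k0).
  rewrite mulr_sumr; apply: eq_bigr => m _.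
  rewrite /vser /Bt (exprD q (2 * m)) exprM hq2 (exprMn m (Num.norm x) M) (exprD M m k) -hPq; ring.
rewrite hB hV limZl_tmp //.
Qed.
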